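(* Let $(\bm M_s)$ and $(\tilde{\bm M}_s)$ be sequences of parameters with $\bm M_s,\tilde{\bm M}_s\in\mathcal M$ for all $s$. Then for every $t$, $$\max_{1\le i\le k_x}\big|g^x_i(\bm M_{t-H:t-1})-g^x_i(\tilde{\bm M}_{t-H:t-1})\big|\le L_g(H)\sum_{k=1}^H(1-\gamma)^{k-1}\|\bm M_{t-k}-\tilde{\bm M}_{t-k}\|_F,$$ $$\max_{1\le j\le k_u}\big|g^u_j(\bm M_{t-H:t})-g^u_j(\tilde{\bm M}_{t-H:t})\big|\le L_g(H)\sum_{k=0}^H(1-\gamma)^{\max(k-1,0)}\|\bm M_{t-k}-\tilde{\bm M}_{t-k}\|_F,$$ where $L_g(H)=\bar w\sqrt n\max(\|D_x\|_\infty,\|D_u\|_\infty)\kappa^3\kappa_B\sqrt H$.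
   Context: $A\in\mathbb R^{n\times n}$, $B\in\mathbb R^{n\times m}$, $\bar w>0$, $D_x\in\mathbb R^{k_x\times n}$, $D_u\in\mathbb R^{k_u\times m}$ with rows $D_{x,i}^\top$, $D_{u,j}^\top$; matrix $\|\cdot\|_\infty$ = max absolute row sum, $\|\cdot\|_2$ spectral norm, $\|\cdot\|_1$ vector 1-norm. For $\kappa\ge1$, $\gamma\in(0,1]$, $K$ is $(\kappa,\gamma)$-strongly stable if $A-BK=Q^{-1}LQ$ with $\|L\|_2\le1-\gamma$ and $\max(\|Q\|_2,\|Q^{-1}\|_2,\|K\|_2)\le\kappa$; $\kappa_B=\max(\|B\|_2,1)$. Fix $(\kappa,\gamma)$-strongly stable $\mathbb K$, $A_{\mathbb K}=A-B\mathbb K$, $H\ge1$. Parameters $\bm M=(M^{[1]},\dots,M^{[H]})$, $M^{[i]}\in\mathbb R^{m\times n}$, with $\|\bm M\|_F=(\sum_i\|M^{[i]}\|_F^2)^{1/2}$; $\mathcal M=\{\bm M:\|M^{[i]}\|_\infty\le2\sqrt n\kappa^3(1-\gamma)^{i-1}\}$. $\Phi^x_k(\bm M_{t-H:t-1})=A_{\mathbb K}^{k-1}\mathds1_{(k\le H)}+\sum_{i=1}^HA_{\mathbb K}^{i-1}BM_{t-i}^{[k-i]}\mathds1_{(1\le k-i\le H)}$, $\Phi^u_k(\bm M_{t-H:t})=M_t^{[k]}\mathds1_{(k\le H)}-\mathbb K\Phi^x_k(\bm M_{t-H:t-1})$ for $k=1,\dots,2H$. $g^x_i(\bm M_{t-H:t-1})=\bar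 w\sum_{k=1}^{2H}\|D_{x,i}^\top\Phi^x_k(\bm M_{t-H:t-1})\|_1$ and $g^u_j(\bm M_{t-H:t})=\bar w\sum_{k=1}^{2H}\|D_{u,j}^\top\Phi^u_k(\bm M_{t-H:t})\|_1$. *)

(* Defs.v *)
From HB Require Import structures.
From mathcomp Require Import all_boot all_order all_algebra.
From mathcomp Require Import boolp classical_sets reals.
Set Implicit Arguments. Unset Strict Implicit. Unset Printing Implicit Defensive.
Import Order.TTheory GRing.Theory Num.Theory.
Local Open Scope ring_scope.

Section Defs.
Variable R : realType.

Definition vnorm2 {n : nat} (v : 'cV[R]_n) : R :=
  Num.sqrt (\sum_(i < n) v i 0 ^+ 2).

Definition opnorm2 {p q : nat} (A : 'M[R]_(p, q)) : R :=
  sup [set r : R | exists v : 'cV[R]_q, vnorm2 v <= 1 /\ r = vnorm2 (A *m v)].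

Definition mxnorm_inf {p q : nat} (A : 'M[R]_(p, q)) : R :=
  \big[Num.max/0]_(i < p) \sum_(j < q) `|A i j|.

Definition frob {p q : nat} (A : 'M[R]_(p, q)) : R :=
  Num.sqrt (\sum_(i < p) \sum_(j < q) A i j ^+ 2).

Definition rnorm1 {q : nat} (v : 'rV[R]_q) : R := \sum_(j < q) `|v 0 j|.

Definition strongly_stable {n m : nat} (A : 'M[R]_n) (B : 'M[R]_(n, m))
    (K : 'M[R]_(m, n)) (kappa gamma : R) : Prop :=
  exists (Q L : 'M[R]_n),
    [/\ Q \in unitmx, A - B *m K = invmx Q *m L *m Q,
        opnorm2 L <= 1 - gamma &
        [/\ opnorm2 Q <= kappa, opnorm2 (invmx Q) <= kappa & opnorm2 K <= kappa]].

Definition kappaB {n m : nat} (B : 'M[R]_(n, m)) : R := Num.max (opnorm2 B) 1.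

(* A parameter bold-M = (M^[1], ..., M^[H]) is represented as a function
   nat -> 'M_(m,n); only the indices 1..H are ever used. *)
Definition param (m n : nat) := nat -> 'M[R]_(m, n).

Definition param_frob {m n : nat} (H : nat) (M : param m n) : R :=
  Num.sqrt (\sum_(1 <= i < H.+1) frob (M i) ^+ 2).

Definition param_sub {m n : nat} (M M' : param m n) : param m n :=
  fun i => M i - M' i.

Definition in_calM {m n : nat} (H : nat) (kappa gamma : R) (M : param m n) : Prop :=
  forall i : nat, (1 <= i <= H)%N ->
    mxnorm_inf (M i) <= 2 * Num.sqrt n%:R * kappa ^+ 3 * (1 - gamma) ^+ i.-1.

Definition Phix {n m : nat} (A : 'M[R]_n) (B : 'M[R]_(n, m)) (K : 'M[R]_(m, n))
    (H : nat) (Ms : int -> param m n) (t : int) (k : nat) : 'M[R]_n :=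
  (if (k <= H)%N then (A - B *m K) ^+ k.-1 else 0) +
  \sum_(1 <= i < H.+1)
     (if (i < k)%N && (k - i <= H)%N
      then (A - B *m K) ^+ i.-1 *m B *m Ms (t - i%:Z) (k - i)%N
      else 0).

Definition Phiu {n m : nat} (A : 'M[R]_n) (B : 'M[R]_(n, m)) (K : 'M[R]_(m, n))
    (H : nat) (Ms : int -> param m n) (t : int) (k : nat) : 'M[R]_(m, n) :=
  (if (k <= H)%N then Ms t k else 0) - K *m Phix A B K H Ms t k.

Definition gx {n m kx : nat} (A : 'M[R]_n) (B : 'M[R]_(n, m)) (K : 'M[R]_(m, n))
    (Dx : 'M[R]_(kx, n)) (wbar : R) (H : nat) (Ms : int -> param m n) (t : int)
    (i : 'I_kx) : R :=
  wbar * \sum_(1 <= k < (2 * H).+1) rnorm1 (row i Dx *m Phix A B K H Ms t k).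

Definition gu {n m ku : nat} (A : 'M[R]_n) (B : 'M[R]_(n, m)) (K : 'M[R]_(m, n))
    (Du : 'M[R]_(ku, m)) (wbar : R) (H : nat) (Ms : int -> param m n) (t : int)
    (j : 'I_ku) : R :=
  wbar * \sum_(1 <= k < (2 * H).+1) rnorm1 (row j Du *m Phiu A B K H Ms t k).

Definition Lg {n m kx ku : nat} (B : 'M[R]_(n, m)) (Dx : 'M[R]_(kx, n))
    (Du : 'M[R]_(ku, m)) (wbar kappa : R) (H : nat) : R :=
  wbar * Num.sqrt n%:R * Num.max (mxnorm_inf Dx) (mxnorm_inf Du) * kappa ^+ 3
  * kappaB B * Num.sqrt H%:R.

End Defs.

(* Main.v *)
Require Import Defs.
From HB Require Import structures.
From mathcomp Require Import all_boot all_order all_algebra.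
From mathcomp Require Import boolp classical_sets reals.
From mathcomp Require Import ring lra zify.
Import Order.TTheory GRing.Theory Num.Theory.
Set Implicit Arguments. Unset Strict Implicit. Unset Printing Implicit Defensive.
Local Open Scope ring_scope.
Lemma cs_seq (R : realType) (I : Type) (r : seq I) (x y : I -> R) :
  (\sum_(i <- r) x i * y i) ^+ 2 <= (\sum_(i <- r) x i ^+ 2) * (\sum_(i <- r) y i ^+ 2).
Proof.
have H0 : 0 <= \sum_(i <- r) \sum_(j <- r) (x i * y j - x j * y i) ^+ 2.
  by apply: sumr_ge0 => i _; apply: sumr_ge0 => j _; exact: sqr_ge0.
have E : \sum_(i <- r) \sum_(j <- r) (x i * y j - x j * y i) ^+ 2 =
   \sum_(i <- r) (x i ^+ 2 * (\sum_(j <- r) y j ^+ 2) + y i ^+ 2 * (\sum_(j <- r) x j ^+ 2)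
      - (x i * y i * (\sum_(j <- r) x j * y j)) *+ 2).
  apply: eq_bigr => i _.
  rewrite !mulr_sumr -sumrMnl. rewrite -big_split -sumrB /=.
  by apply: eq_bigr => j _; ring.
rewrite E sumrB big_split /= sumrMnl -!mulr_suml in H0.
move: H0; rewrite [X in _ + X - _]mulrC -expr2; lra.
Qed.

Lemma vnorm2_ge0 (R : realType) n (v : 'cV[R]_n) : 0 <= vnorm2 v.
Proof. exact: sqrtr_ge0. Qed.

Lemma vnorm2_sqr (R : realType) n (v : 'cV[R]_n) : vnorm2 v ^+ 2 = \sum_(i < n) v i 0 ^+ 2.
Proof. by rewrite sqr_sqrtr //; apply: sumr_ge0 => i _; exact: sqr_ge0. Qed.

Lemma frob_ge0 (R : realType) p q (A : 'M[R]_(p, q)) : 0 <= frob A.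
Proof. exact: sqrtr_ge0. Qed.

Lemma sqrt_le_of_sqr (R : realType) (a b : R) : 0 <= a -> a ^+ 2 <= b -> a <= Num.sqrt b.
Proof.
move=> a0 ab; rewrite -(ger0_norm a0) -sqrtr_sqr; exact: ler_wsqrtr.
Qed.

Lemma vnorm2_frob (R : realType) p q (X : 'M[R]_(p, q)) (v : 'cV[R]_q) :
  vnorm2 (X *m v) <= frob X * vnorm2 v.
Proof.
rewrite /frob /vnorm2 -sqrtrM; last by apply: sumr_ge0 => i _; apply: sumr_ge0 => j _; exact: sqr_ge0.
apply: ler_wsqrtr; rewrite mulr_suml; apply: ler_sum => i _.
by rewrite mxE; exact: cs_seq.
Qed.

Lemma vnorm2_scale (R : realType) n (a : R) (v : 'cV[R]_n) :
  vnorm2 (a *: v) = `|a| * vnorm2 v.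
Proof.
rewrite /vnorm2 -sqrtr_sqr -sqrtrM ?sqr_ge0 //; congr Num.sqrt.
by rewrite mulr_sumr; apply: eq_bigr => i _; rewrite mxE exprMn.
Qed.

Lemma opnorm_has_ub (R : realType) p q (X : 'M[R]_(p, q)) :
  has_ubound [set r : R | exists v : 'cV[R]_q, vnorm2 v <= 1 /\ r = vnorm2 (X *m v)].
Proof.
exists (frob X) => r [v [v1 ->]]; apply: le_trans (vnorm2_frob X v) _.
by rewrite -[leRHS]mulr1 ler_wpM2l // frob_ge0.
Qed.

Lemma opnorm_ub (R : realType) p q (X : 'M[R]_(p, q)) (v : 'cV[R]_q) :
  vnorm2 v <= 1 -> vnorm2 (X *m v) <= opnorm2 X.
Proof. by move=> v1; apply: (ub_le_sup (opnorm_has_ub X)); exists v. Qed.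

Lemma opnorm_ge0 (R : realType) p q (X : 'M[R]_(p, q)) : 0 <= opnorm2 X.
Proof.
apply: le_trans (opnorm_ub X (v := 0) _); first exact: vnorm2_ge0.
by rewrite /vnorm2 big1 ?sqrtr0 // => i _; rewrite mxE expr0n.
Qed.

Lemma opnorm_vec (R : realType) p q (X : 'M[R]_(p, q)) (v : 'cV[R]_q) :
  vnorm2 (X *m v) <= opnorm2 X * vnorm2 v.
Proof.
have [s0|spos] := eqVneq (vnorm2 v) 0.
  by apply: le_trans (vnorm2_frob X v) _; rewrite s0 !mulr0.
have sp : 0 < vnorm2 v by rewrite lt_neqAle eq_sym spos vnorm2_ge0.
have H1 : vnorm2 ((vnorm2 v)^-1 *: v) <= 1.
  by rewrite vnorm2_scale ger0_norm ?invr_ge0 ?vnorm2_ge0 // mulVf.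
have := opnorm_ub X H1; rewrite -scalemxAr vnorm2_scale ger0_norm ?invr_ge0 ?vnorm2_ge0 //.
by rewrite ler_pdivrMl // mulrC.
Qed.

Lemma opnorm_le (R : realType) p q (X : 'M[R]_(p, q)) a (v : 'cV[R]_q) :
  opnorm2 X <= a -> vnorm2 (X *m v) <= a * vnorm2 v.
Proof. by move=> h; apply: le_trans (opnorm_vec X v) _; rewrite ler_wpM2r // vnorm2_ge0. Qed.

Lemma abs_le_vnorm2 (R : realType) n (z : 'cV[R]_n) l : `|z l 0| <= vnorm2 z.
Proof.
rewrite -sqrtr_sqr; apply: ler_wsqrtr; rewrite (bigD1 l) //= lerDl.
by apply: sumr_ge0 => i _; exact: sqr_ge0.
Qed.

Lemma rowsum_bound (R : realType) p q (Y : 'M[R]_(p, q)) (c : R) :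
  0 <= c -> (forall w, vnorm2 (Y *m w) <= c * vnorm2 w) ->
  forall l, \sum_(j < q) `|Y l j| <= Num.sqrt q%:R * c.
Proof.
move=> c0 hY l.
pose w : 'cV[R]_q := \col_j Y l j.
set s := vnorm2 w.
have s0 : 0 <= s by exact: vnorm2_ge0.
have hs : s ^+ 2 <= c * s.
  have -> : s ^+ 2 = (Y *m w) l 0.
    rewrite vnorm2_sqr !mxE; apply: eq_bigr => j _; rewrite !mxE expr2 //.
  apply: le_trans (hY w); apply: le_trans (abs_le_vnorm2 _ l).
  exact: real_ler_norm (num_real _).
have sc : s <= c by nra.
have cs := cs_seq (index_enum 'I_q) (fun _ => 1) (fun j => `|Y l j|).
have e1 : \sum_(j < q) `|Y l j| ^+ 2 = s ^+ 2.
  by rewrite vnorm2_sqr; apply: eq_bigr => j _; rewrite mxE real_normK // num_real.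
rewrite (eq_bigr (fun j => 1 * `|Y l j|)) ?(big_const, card_ord) => [|j _]; last by rewrite mul1r.
apply: le_trans (_ : Num.sqrt (q%:R * s ^+ 2) <= _).
  apply: sqrt_le_of_sqr; first by apply: sumr_ge0 => j _; rewrite mul1r.
  have e2 : \sum_(j <- index_enum 'I_q) (fun _ => (1:R)) j ^+ 2 = q%:R.
    by rewrite (eq_bigr (fun _ => 1)) ?sumr_const ?card_ord // => j _; rewrite expr1n.
  by move: cs; rewrite e1 e2.
rewrite sqrtrM ?ler0n // sqrtr_sqr ger0_norm //.
by rewrite ler_wpM2l ?sqrtr_ge0.
Qed.

Lemma rnorm1_ge0 (R : realType) q (v : 'rV[R]_q) : 0 <= rnorm1 v.
Proof. by apply: sumr_ge0 => j _. Qed.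

Lemma rnorm1_0 (R : realType) q : rnorm1 (0 : 'rV[R]_q) = 0.
Proof. by rewrite /rnorm1 big1 // => j _; rewrite mxE normr0. Qed.

Lemma rnorm1_add (R : realType) q (a b : 'rV[R]_q) : rnorm1 (a + b) <= rnorm1 a + rnorm1 b.
Proof. by rewrite /rnorm1 -big_split /=; apply: ler_sum => j _; rewrite mxE ler_normD. Qed.

Lemma rnorm1_opp (R : realType) q (a : 'rV[R]_q) : rnorm1 (- a) = rnorm1 a.
Proof. by rewrite /rnorm1; apply: eq_bigr => j _; rewrite mxE normrN. Qed.

Lemma rnorm1_sub (R : realType) q (a b : 'rV[R]_q) : rnorm1 (a - b) <= rnorm1 a + rnorm1 b.
Proof. by rewrite -(rnorm1_opp b); exact: rnorm1_add. Qed.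

Lemma rnorm1_dist (R : realType) q (a b : 'rV[R]_q) : `|rnorm1 a - rnorm1 b| <= rnorm1 (a - b).
Proof.
have h1 := rnorm1_add (a - b) b; have h2 := rnorm1_add (b - a) a.
rewrite subrK in h1; rewrite subrK in h2.
have e : rnorm1 (b - a) = rnorm1 (a - b) by rewrite -rnorm1_opp opprB.
rewrite ler_norml; apply/andP; split; lra.
Qed.

Lemma rnorm1_sum (R : realType) q I (r : seq I) (P : pred I) (F : I -> 'rV[R]_q) :
  rnorm1 (\sum_(i <- r | P i) F i) <= \sum_(i <- r | P i) rnorm1 (F i).
Proof.
elim/big_ind2: _ => //; first by rewrite rnorm1_0.
by move=> a b c d h1 h2; apply: le_trans (rnorm1_add _ _) _; exact: lerD.
Qed.

Lemma rnorm1_mul (R : realType) p q (d : 'rV[R]_p) (Y : 'M[R]_(p, q)) C :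
  (forall l, \sum_(j < q) `|Y l j| <= C) -> rnorm1 (d *m Y) <= rnorm1 d * C.
Proof.
move=> hY; rewrite /rnorm1.
apply: le_trans (_ : \sum_(j < q) \sum_(l < p) `|d 0 l| * `|Y l j| <= _).
  apply: ler_sum => j _; rewrite mxE; apply: le_trans (ler_norm_sum _ _ _) _.
  by apply: ler_sum => l _; rewrite normrM.
rewrite exchange_big /= mulr_suml; apply: ler_sum => l _.
by rewrite -mulr_sumr ler_wpM2l.
Qed.

Lemma rnorm1_row_le (R : realType) p q (D : 'M[R]_(p, q)) i : rnorm1 (row i D) <= mxnorm_inf D.
Proof.
rewrite /mxnorm_inf /rnorm1 (eq_bigr (fun j => `|D i j|)) => [|j _]; last by rewrite mxE.
exact: (le_bigmax 0 (fun i => \sum_(j < q) `|D i j|) i).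
Qed.
Lemma reindex (R : realType) H i (F : nat -> R) : (i <= H)%N ->
 \sum_(1 <= k < (2*H).+1) (if (i < k)%N && (k - i <= H)%N then F (k - i)%N else 0)
   = \sum_(1 <= j < H.+1) F j.
Proof.
move=> iH.
rewrite (big_cat_nat (n := i.+1)) //=; last lia.
rewrite [X in X + _]big_nat_cond [X in X + _]big1 ?add0r; last first.
  by move=> k /andP[/andP[_ hk] _]; rewrite ifF //; lia.
rewrite (big_cat_nat (n := i + H.+1)) //=; try lia.
rewrite [X in _ + X]big_nat_cond [X in _ + X]big1 ?addr0; last first.
  by move=> k /andP[/andP[hk _] _]; rewrite ifF //; lia.
rewrite -{1}(add1n i) big_addn addKn big_nat_cond [RHS]big_nat_cond.
apply: eq_bigr => k /andP[/andP[h1 h2] _].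
by rewrite ifT ?addnK //; lia.
Qed.

Lemma sum_le_sqrt (R : realType) H (f : nat -> R) : (forall j, 0 <= f j) ->
  \sum_(1 <= j < H.+1) f j <= Num.sqrt H%:R * Num.sqrt (\sum_(1 <= j < H.+1) f j ^+ 2).
Proof.
move=> f0; rewrite -sqrtrM ?ler0n //; apply: sqrt_le_of_sqr; first exact: sumr_ge0.
have cs := cs_seq (index_iota 1 H.+1) (fun _ => (1:R)) f.
have e2 : \sum_(j <- index_iota 1 H.+1) (fun _ => (1:R)) j ^+ 2 = H%:R.
  by rewrite (eq_bigr (fun _ => 1)) ?sumr_const_nat ?subn1 // => j _; rewrite expr1n.
by move: cs; rewrite e2 /=; under eq_bigr do rewrite mul1r.
Qed.

Lemma pow_vec (R : realType) n (L : 'M[R]_n) (a : R) (v : 'cV[R]_n) p :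
  0 <= a -> opnorm2 L <= a -> vnorm2 (L ^+ p *m v) <= a ^+ p * vnorm2 v.
Proof.
move=> a0 La; elim: p v => [|p IH] v.
  by rewrite !expr0 -idmxE mul1mx mul1r.
rewrite exprS -mulmxE -mulmxA exprS -mulrA.
apply: le_trans (opnorm_le _ La) _; exact: ler_wpM2l.
Qed.

Lemma AK_pow (R : realType) n (AK Q L : 'M[R]_n) p :
  Q \in unitmx -> AK = invmx Q *m L *m Q -> AK ^+ p = invmx Q *m (L ^+ p) *m Q.
Proof.
move=> Qu ->; elim: p => [|p IH].
  by rewrite !expr0 -idmxE mulmx1 mulVmx.
rewrite exprSr IH -mulmxE exprSr -mulmxE.
by rewrite !mulmxA -[invmx Q *m L ^+ p *m Q *m invmx Q]mulmxA mulmxV // mulmx1.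
Qed.

Lemma Phix_diff (R : realType) n m (A : 'M[R]_n) (B : 'M[R]_(n, m)) (K : 'M[R]_(m, n))
    (H : nat) (Ms Mt : int -> param R m n) (t : int) (k : nat) :
  Phix A B K H Ms t k - Phix A B K H Mt t k =
  \sum_(1 <= i < H.+1)
     (if (i < k)%N && (k - i <= H)%N
      then (A - B *m K) ^+ i.-1 *m B *m (Ms (t - i%:Z) (k - i)%N - Mt (t - i%:Z) (k - i)%N)
      else 0).
Proof.
rewrite /Phix opprD addrACA subrr add0r -sumrB; apply: eq_bigr => i _.
by case: ifP => _; rewrite ?subrr // mulmxBr.
Qed.

Lemma eqle (R : realType) (x y : R) : x = y -> x <= y.
Proof. by move=> ->. Qed.

Lemma xpart (R : realType) n m p (A : 'M[R]_n) (B : 'M[R]_(n, m)) (K : 'M[R]_(m, n))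
    (H : nat) (Ms Mt : int -> param R m n) (t : int) (Q L : 'M[R]_n) (P : 'M[R]_(p, n))
    (cP kappa gamma : R) (d : 'rV[R]_p) :
  Q \in unitmx -> A - B *m K = invmx Q *m L *m Q -> opnorm2 L <= 1 - gamma ->
  opnorm2 Q <= kappa -> opnorm2 (invmx Q) <= kappa -> gamma <= 1 -> 1 <= kappa ->
  0 <= cP -> (forall v, vnorm2 (P *m v) <= cP * vnorm2 v) ->
  \sum_(1 <= k < (2 * H).+1)
     rnorm1 (d *m (P *m (Phix A B K H Ms t k - Phix A B K H Mt t k)))
  <= rnorm1 d * Num.sqrt n%:R * (cP * kappa ^+ 2 * kappaB B) *
     (Num.sqrt H%:R * \sum_(1 <= i < H.+1) (1 - gamma) ^+ i.-1 *
        param_frob H (param_sub (Ms (t - i%:Z)) (Mt (t - i%:Z)))).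
Proof.
move=> Qu AKe hL hQ hQi g1 k1 cP0 hP.
set C := rnorm1 d * Num.sqrt n%:R * (cP * kappa ^+ 2 * kappaB B).
set f := fun (i j : nat) => frob (Ms (t - i%:Z) j - Mt (t - i%:Z) j).
have k0 : 0 <= kappa by lra.
have g0 : 0 <= 1 - gamma by lra.
have kB0 : 0 <= kappaB B by rewrite /kappaB le_max ler01 orbT.
have hB : opnorm2 B <= kappaB B by rewrite /kappaB le_max lexx.
have step1 : \sum_(1 <= k < (2 * H).+1)
     rnorm1 (d *m (P *m (Phix A B K H Ms t k - Phix A B K H Mt t k))) <= \sum_(1 <= k < (2 * H).+1) \sum_(1 <= i < H.+1)
   (if (i < k)%N && (k - i <= H)%N then C * ((1 - gamma) ^+ i.-1 * f i (k - i)%N) else 0).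
  apply: ler_sum => k _.
  rewrite Phix_diff !mulmx_sumr; apply: le_trans (rnorm1_sum _ _ _) _.
  apply: ler_sum => i _; case: ifP => _; last by rewrite !mulmx0 rnorm1_0.
  set c := cP * (kappa * ((1 - gamma) ^+ i.-1 * (kappa * (kappaB B * f i (k - i)%N)))).
  have c0 : 0 <= c.
    by rewrite /c !mulr_ge0 ?exprn_ge0 ?frob_ge0.
  have hY : forall w, vnorm2 ((P *m ((A - B *m K) ^+ i.-1 *m B *m
        (Ms (t - i%:Z) (k - i)%N - Mt (t - i%:Z) (k - i)%N))) *m w) <= c * vnorm2 w.
    move=> w; rewrite (AK_pow _ Qu AKe) !mulmxA -!mulmxA.
    rewrite /c -!mulrA.
    apply: le_trans (hP _) _; rewrite ler_wpM2l //.
    apply: le_trans (opnorm_le _ hQi) _; rewrite ler_wpM2l //.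
    apply: le_trans (pow_vec _ _ g0 hL) _; rewrite ler_wpM2l ?exprn_ge0 //.
    apply: le_trans (opnorm_le _ hQ) _; rewrite ler_wpM2l //.
    apply: le_trans (opnorm_le _ hB) _; rewrite ler_wpM2l //.
    exact: vnorm2_frob.
  apply: le_trans (rnorm1_mul d (rowsum_bound c0 hY)) _.
  by apply: eqle; rewrite /C /c; ring.
apply: le_trans step1 _.
rewrite (exchange_big_nat _ 1 (2 * H).+1 1 H.+1) /=.
apply: le_trans (_ : \sum_(1 <= i < H.+1) C * ((1 - gamma) ^+ i.-1 *
     (Num.sqrt H%:R * param_frob H (param_sub (Ms (t - i%:Z)) (Mt (t - i%:Z))))) <= _);
  last first.
  apply: eqle; rewrite mulr_sumr mulr_sumr; apply: eq_bigr => i _; ring.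
apply: ler_sum_nat => i /andP[hi1 hi2].
rewrite (reindex (fun j => C * ((1 - gamma) ^+ i.-1 * f i j))); last lia.
rewrite -mulr_sumr -mulr_sumr.
have C0 : 0 <= C by rewrite /C !mulr_ge0 ?rnorm1_ge0 ?sqrtr_ge0 ?exprn_ge0.
rewrite ler_wpM2l // ler_wpM2l ?exprn_ge0 //.
apply: le_trans (sum_le_sqrt _ _) _; first by move=> j; exact: frob_ge0.
by [].
Qed.

Lemma arith1 (R : realType) (w a M s k2 k3 kB h S : R) :
  0 <= w -> 0 <= a -> a <= M -> 0 <= s -> 0 <= k2 -> k2 <= k3 -> 0 <= kB -> 0 <= h -> 0 <= S ->
  w * (a * s * (k2 * kB) * (h * S)) <= w * s * M * k3 * kB * h * S.
Proof.
move=> w0 a0 aM s0 k20 k23 kB0 h0 S0.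
have e1 : w * (a * s * (k2 * kB) * (h * S)) = (w * s * kB * h * S) * (a * k2) by ring.
have e2 : w * s * M * k3 * kB * h * S = (w * s * kB * h * S) * (M * k3) by ring.
rewrite e1 e2 ler_wpM2l ?mulr_ge0 //; exact: ler_pM.
Qed.

Lemma arith2 (R : realType) (w a M s k3 kB h P0 : R) :
  0 <= w -> 0 <= a -> a <= M -> 0 <= s -> 1 <= k3 -> 1 <= kB -> 0 <= h -> 0 <= P0 ->
  w * (a * s * (h * P0)) <= w * s * M * k3 * kB * h * P0.
Proof.
move=> w0 a0 aM s0 k31 kB1 h0 P00.
have e1 : w * (a * s * (h * P0)) = (w * s * h * P0) * a by ring.
have e2 : w * s * M * k3 * kB * h * P0 = (w * s * h * P0) * (M * (k3 * kB)) by ring.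
rewrite e1 e2 ler_wpM2l ?mulr_ge0 //.
have M0 : 0 <= M by apply: le_trans aM.
have : 1 <= k3 * kB by rewrite -[1]mulr1; apply: ler_pM.
move=> h1; apply: le_trans aM _; rewrite -{1}[M]mulr1; exact: ler_wpM2l.
Qed.

Lemma subsub (V : zmodType) (a b x y : V) : (a - x) - (b - y) = (a - b) - (x - y).
Proof. by rewrite opprD opprK addrACA opprB [y - x]addrC. Qed.

Lemma Phiu_diff (R : realType) n m (A : 'M[R]_n) (B : 'M[R]_(n, m)) (K : 'M[R]_(m, n))
    (H : nat) (Ms Mt : int -> param R m n) (t : int) (k : nat) :
  Phiu A B K H Ms t k - Phiu A B K H Mt t k =
  (if (k <= H)%N then Ms t k - Mt t k else 0) -
  K *m (Phix A B K H Ms t k - Phix A B K H Mt t k).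
Proof.
by rewrite /Phiu mulmxBr subsub; case: ifP => _; rewrite ?subrr.
Qed.

Theorem lemma16 (R : realType) (n m kx ku : nat)
  (A : 'M[R]_n) (B : 'M[R]_(n, m)) (wbar : R)
  (Dx : 'M[R]_(kx, n)) (Du : 'M[R]_(ku, m))
  (kappa gamma : R) (K : 'M[R]_(m, n)) (H : nat)
  (Ms Mt : int -> param R m n) :
  0 < wbar -> 1 <= kappa -> 0 < gamma -> gamma <= 1 ->
  strongly_stable A B K kappa gamma -> (1 <= H)%N ->
  (forall s : int, in_calM H kappa gamma (Ms s)) ->
  (forall s : int, in_calM H kappa gamma (Mt s)) ->
  forall t : int,
    (forall i : 'I_kx,
       `|gx A B K Dx wbar H Ms t i - gx A B K Dx wbar H Mt t i|
       <= Lg B Dx Du wbar kappa H *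
          \sum_(1 <= k < H.+1) (1 - gamma) ^+ k.-1 *
             param_frob H (param_sub (Ms (t - k%:Z)) (Mt (t - k%:Z)))) /\
    (forall j : 'I_ku,
       `|gu A B K Du wbar H Ms t j - gu A B K Du wbar H Mt t j|
       <= Lg B Dx Du wbar kappa H *
          \sum_(0 <= k < H.+1) (1 - gamma) ^+ k.-1 *
             param_frob H (param_sub (Ms (t - k%:Z)) (Mt (t - k%:Z)))).
Proof.
move=> w0 k1 gpos g1 [Q [L [Qu AKe hL [hQ hQi hK]]]] H1 _ _ t.
have k0 : 0 <= kappa by lra.
have g0 : 0 <= 1 - gamma by lra.
have kB1 : 1 <= kappaB B by rewrite /kappaB le_max lexx orbT.
have kB0 : 0 <= kappaB B by lra.
have w0' : 0 <= wbar by lra.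
set S := \sum_(1 <= k < H.+1) (1 - gamma) ^+ k.-1 *
             param_frob H (param_sub (Ms (t - k%:Z)) (Mt (t - k%:Z))).
have S0 : 0 <= S by apply: sumr_ge0 => k _; rewrite mulr_ge0 ?exprn_ge0 ?sqrtr_ge0.
have k23 : kappa ^+ 2 <= kappa ^+ 3.
  by rewrite (exprSr kappa 2) -{1}[kappa ^+ 2]mulr1 ler_wpM2l ?exprn_ge0.
split.
  move=> i; rewrite /gx -mulrBr normrM (ger0_norm w0') -sumrB.
  set d := row i Dx.
  have hx : \sum_(1 <= k < (2 * H).+1) `|rnorm1 (d *m Phix A B K H Ms t k) -
                                        rnorm1 (d *m Phix A B K H Mt t k)|
    <= \sum_(1 <= k < (2 * H).+1)
         rnorm1 (d *m (1%:M *m (Phix A B K H Ms t k - Phix A B K H Mt t k))).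
    by apply: ler_sum => k _; rewrite mul1mx mulmxBr; exact: rnorm1_dist.
  have hxp := @xpart R n m n A B K H Ms Mt t Q L 1%:M 1 kappa gamma d Qu AKe hL hQ hQi g1 k1 ler01
     _.
  have := hxp (fun v => eqle (etrans (congr1 (@vnorm2 R n) (mul1mx v)) (esym (mul1r _)))). clear hxp => hxp.
  apply: le_trans (ler_wpM2l w0' (le_trans (ler_norm_sum _ _ _) (le_trans hx hxp))) _.
  rewrite mul1r /Lg; apply: arith1 => //; rewrite ?rnorm1_ge0 ?sqrtr_ge0 ?exprn_ge0 //.
  by apply: le_trans (rnorm1_row_le Dx i) _; rewrite le_max lexx.
move=> j; rewrite /gu -mulrBr normrM (ger0_norm w0') -sumrB.
set d := row j Du.
rewrite [X in _ <= _ * X](big_ltn (m := 0)) //= expr0 mul1r subr0 -/S.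
have hu : \sum_(1 <= k < (2 * H).+1) `|rnorm1 (d *m Phiu A B K H Ms t k) -
                                      rnorm1 (d *m Phiu A B K H Mt t k)|
    <= \sum_(1 <= k < (2 * H).+1)
         (rnorm1 (d *m (if (k <= H)%N then Ms t k - Mt t k else 0)) +
          rnorm1 (d *m (K *m (Phix A B K H Ms t k - Phix A B K H Mt t k)))).
  apply: ler_sum => k _; apply: le_trans (rnorm1_dist _ _) _.
  by rewrite -mulmxBr Phiu_diff mulmxBr; exact: rnorm1_sub.
rewrite big_split /= in hu.
have hup := @xpart R n m m A B K H Ms Mt t Q L K kappa kappa gamma d Qu AKe hL hQ hQi g1 k1 k0 (fun v => opnorm_le v hK).
set P0 := param_frob H (param_sub (Ms t) (Mt t)).
have hu1 : \sum_(1 <= k < (2 * H).+1) rnorm1 (d *m (if (k <= H)%N then Ms t k - Mt t k else 0))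
   <= rnorm1 d * Num.sqrt n%:R * (Num.sqrt H%:R * P0).
  apply: le_trans (_ : \sum_(1 <= k < (2 * H).+1)
      (if (0 < k)%N && (k - 0 <= H)%N then
         rnorm1 d * (Num.sqrt n%:R * frob (Ms t (k - 0)%N - Mt t (k - 0)%N)) else 0) <= _).
    apply: ler_sum_nat => k /andP[kp _]; rewrite subn0 kp /=.
    case: ifP => _; last by rewrite mulmx0 rnorm1_0.
    apply: rnorm1_mul; apply: rowsum_bound; first exact: frob_ge0.
    by move=> w; exact: vnorm2_frob.
  rewrite (reindex (fun j => rnorm1 d * (Num.sqrt n%:R * frob (Ms t j - Mt t j)))) // -mulr_sumr -mulr_sumr mulrA.
  rewrite ler_wpM2l ?mulr_ge0 ?rnorm1_ge0 ?sqrtr_ge0 //.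
  apply: le_trans (sum_le_sqrt _ _) _; first by move=> l; exact: frob_ge0.
  by [].
have da : rnorm1 d <= Num.max (mxnorm_inf Dx) (mxnorm_inf Du).
  by apply: le_trans (rnorm1_row_le Du j) _; rewrite le_max lexx orbT.
apply: le_trans (ler_wpM2l w0' (le_trans (ler_norm_sum _ _ _) (le_trans hu (lerD hu1 hup)))) _.
rewrite mulrDr mulrDr; apply: lerD; rewrite /Lg.
  apply: arith2 => //; rewrite ?rnorm1_ge0 ?sqrtr_ge0 //; last by rewrite exprn_ege1.
by apply: arith1 => //; rewrite ?rnorm1_ge0 ?sqrtr_ge0 ?mulr_ge0 ?exprn_ge0 // -exprS.
Qed.
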